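(* Let $\mathbb{Z}$ be a finite-dimensional Euclidean space, $L>0$, and let $G:\mathbb{Z}\to\mathbb{Z}$ be $\frac{1}{L}$-co-coercive. Assume there exists $z^*\in\mathbb{Z}$ with $G(z^* )=0$. Let $z^0\in\mathbb{Z}$, let $\gamma_k\ge 0$ ($k\ge0$), and let $\{z^k\}$ be generated by the inexact Halpern iteration: for $k\ge 0$, choose any $\tilde z^k\in\mathbb{Z}$ with $\|G(z^k)-\tilde z^k\|\le\gamma_k$ and set $z^{k+1}=\beta_k z^0+(1-\beta_k)z^k-\eta_k\tilde z^k$, where $\beta_k=1/(k+2)$ and $\eta_k=(1-\beta_k)/L$. Then for every solution $z^*$ with $G(z^* )=0$ and all $k\ge0$, \[ \|G(z^k)\|^2\le \frac{\Big(7L\|z^0-z^*\|+10\sqrt{\sum_{i=0}^{k-1}(i+1)^2\gamma_i^2}\Big)^2}{(k+1)(k+2)}, \qquad \|z^{k+1}-z^k\|^2\le \frac{8\Big(7L\|z^0-z^*\|+11\sqrt{\sum_{i=0}^{k}(i+1)^2\gamma_i^2}\Big)^2}{L^2(k+1)(k+2)}. \] (An empty sum equals $0$.)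
   Context: A map $G:\mathbb{Z}\to\mathbb{Z}$ is $c$-co-coercive ($c>0$) if $\langle G(x_1)-G(x_2),x_1-x_2\rangle\ge c\|G(x_1)-G(x_2)\|^2$ for all $x_1,x_2$. $\|\cdot\|$ is the Euclidean norm. *)

(* Defs.v *)
From mathcomp Require Import all_boot all_order all_algebra.
From mathcomp Require Import reals.
Set Implicit Arguments. Unset Strict Implicit. Unset Printing Implicit Defensive.
Import Order.TTheory GRing.Theory Num.Theory.
Local Open Scope ring_scope.

Definition dotv (R : realType) (n : nat) (u v : 'rV[R]_n) : R :=
  \sum_(i < n) u ord0 i * v ord0 i.

Definition enorm (R : realType) (n : nat) (u : 'rV[R]_n) : R :=
  Num.sqrt (dotv u u).

Definition cocoercive (R : realType) (n : nat) (c : R) (G : 'rV[R]_n -> 'rV[R]_n) : Prop :=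
  forall x1 x2 : 'rV[R]_n,
    dotv (G x1 - G x2) (x1 - x2) >= c * enorm (G x1 - G x2) ^+ 2.

(* Main.v *)
Require Import Defs.
From mathcomp Require Import all_boot all_order all_algebra.
From mathcomp Require Import reals.
From mathcomp Require Import ring lra.
Import Order.TTheory GRing.Theory Num.Theory.
Local Open Scope ring_scope.

Set Implicit Arguments. Unset Strict Implicit. Unset Printing Implicit Defensive.


Lemma dotvC {R : realType} {n : nat} (u : 'rV[R]_n) (v : 'rV[R]_n) : dotv u v = dotv v u.
Proof. by rewrite /dotv; apply: eq_bigr => i _; rewrite mulrC. Qed.

Lemma dotvDl {R : realType} {n : nat} (u : 'rV[R]_n) (v : 'rV[R]_n) (w : 'rV[R]_n) : dotv (u + v) w = dotv u w + dotv v w.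
Proof. by rewrite /dotv -big_split /=; apply: eq_bigr => i _; rewrite !mxE mulrDl. Qed.

Lemma dotvZl {R : realType} {n : nat} (a : R) (u : 'rV[R]_n) (w : 'rV[R]_n) : dotv (a *: u) w = a * dotv u w.
Proof. by rewrite /dotv mulr_sumr; apply: eq_bigr => i _; rewrite !mxE mulrA. Qed.

Lemma dotvNl {R : realType} {n : nat} (u : 'rV[R]_n) (w : 'rV[R]_n) : dotv (- u) w = - dotv u w.
Proof. by rewrite -scaleN1r dotvZl mulN1r. Qed.

Lemma dotvBl {R : realType} {n : nat} (u : 'rV[R]_n) (v : 'rV[R]_n) (w : 'rV[R]_n) : dotv (u - v) w = dotv u w - dotv v w.
Proof. by rewrite dotvDl dotvNl. Qed.

Lemma dotvDr {R : realType} {n : nat} (u : 'rV[R]_n) (v : 'rV[R]_n) (w : 'rV[R]_n) : dotv w (u + v) = dotv w u + dotv w v.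
Proof. by rewrite dotvC dotvDl !(dotvC w). Qed.

Lemma dotvZr {R : realType} {n : nat} (a : R) (u : 'rV[R]_n) (w : 'rV[R]_n) : dotv w (a *: u) = a * dotv w u.
Proof. by rewrite dotvC dotvZl dotvC. Qed.

Lemma dotvNr {R : realType} {n : nat} (u : 'rV[R]_n) (w : 'rV[R]_n) : dotv w (- u) = - dotv w u.
Proof. by rewrite dotvC dotvNl dotvC. Qed.

Lemma dotvBr {R : realType} {n : nat} (u : 'rV[R]_n) (v : 'rV[R]_n) (w : 'rV[R]_n) : dotv w (u - v) = dotv w u - dotv w v.
Proof. by rewrite dotvDr dotvNr. Qed.

Lemma dotv0l {R : realType} {n : nat} (w : 'rV[R]_n) : dotv 0 w = 0.
Proof. by rewrite /dotv big1 // => i _; rewrite mxE mul0r. Qed.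

Lemma dotv0r {R : realType} {n : nat} (w : 'rV[R]_n) : dotv w 0 = 0.
Proof. by rewrite dotvC dotv0l. Qed.

Lemma dotv_ge0 {R : realType} {n : nat} (u : 'rV[R]_n) : 0 <= dotv u u.
Proof. by rewrite /dotv; apply: sumr_ge0 => i _; rewrite -expr2 sqr_ge0. Qed.

Lemma enorm_ge0 {R : realType} {n : nat} (u : 'rV[R]_n) : 0 <= enorm u.
Proof. exact: sqrtr_ge0. Qed.

Lemma enorm_sq {R : realType} {n : nat} (u : 'rV[R]_n) : enorm u ^+ 2 = dotv u u.
Proof. by rewrite /enorm sqr_sqrtr // dotv_ge0. Qed.

Lemma dotv_eq0 {R : realType} {n : nat} (u : 'rV[R]_n) : dotv u u = 0 -> u = 0.
Proof.
move=> h; apply/matrixP => i j; rewrite (ord1 i) mxE.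
have hp : forall k : 'I_n, predT k -> 0 <= u ord0 k * u ord0 k.
  by move=> k _; rewrite -expr2 sqr_ge0.
have := psumr_eq0P hp h (isT : predT j).
by move/eqP; rewrite mulf_eq0 orbb => /eqP.
Qed.

Lemma CS {R : realType} {n : nat} (u : 'rV[R]_n) (v : 'rV[R]_n) : dotv u v <= enorm u * enorm v.
Proof.
have [a0|a0] := eqVneq (enorm u) 0.
  have : dotv u u = 0 by rewrite -enorm_sq a0 expr0n.
  by rewrite a0 mul0r; move/dotv_eq0 ->; rewrite dotv0l.
have [b0|b0] := eqVneq (enorm v) 0.
  have : dotv v v = 0 by rewrite -enorm_sq b0 expr0n.
  by rewrite b0 mulr0; move/dotv_eq0 ->; rewrite dotv0r.
have h := dotv_ge0 (enorm v *: u - enorm u *: v).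
rewrite !(dotvBl, dotvBr, dotvZl, dotvZr) -!enorm_sq (dotvC v u) in h.
have ha := enorm_ge0 u; have hb := enorm_ge0 v.
have hab : 0 < enorm u * enorm v by rewrite mulr_gt0 // lt0r ?a0 ?b0.
nra.
Qed.

Lemma enormN {R : realType} {n : nat} (u : 'rV[R]_n) : enorm (- u) = enorm u.
Proof. by rewrite /enorm dotvNl dotvNr opprK. Qed.

Lemma CSabs {R : realType} {n : nat} (u : 'rV[R]_n) (v : 'rV[R]_n) : `|dotv u v| <= enorm u * enorm v.
Proof.
rewrite ler_norml CS andbT lerNl.
by have := CS (- u) v; rewrite dotvNl enormN.
Qed.

Lemma enormD {R : realType} {n : nat} (u : 'rV[R]_n) (v : 'rV[R]_n) : enorm (u + v) <= enorm u + enorm v.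
Proof.
have h := CS u v.
have h2 : enorm (u + v) ^+ 2 <= (enorm u + enorm v) ^+ 2.
  rewrite enorm_sq !(dotvDl, dotvDr) (dotvC v u) -!enorm_sq. nra.
have := enorm_ge0 (u + v); have := enorm_ge0 u; have := enorm_ge0 v. nra.
Qed.

Lemma enormZ {R : realType} {n : nat} (a : R) (u : 'rV[R]_n) : enorm (a *: u) = `|a| * enorm u.
Proof. by rewrite /enorm dotvZl dotvZr mulrA -expr2 sqrtrM ?sqr_ge0 // sqrtr_sqr. Qed.


Lemma enormB {R : realType} {n : nat} (u : 'rV[R]_n) (v : 'rV[R]_n) : enorm (u - v) = enorm (v - u).
Proof. by rewrite -enormN opprB. Qed.

Lemma subBB {R : realType} {n : nat} (u : 'rV[R]_n) (v : 'rV[R]_n) (w : 'rV[R]_n) (x : 'rV[R]_n) : (u - v) - (w - x) = (u - w) - (v - x).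
Proof. by apply/matrixP => i j; rewrite !mxE; ring. Qed.


Set Implicit Arguments. Unset Strict Implicit. Unset Printing Implicit Defensive.


Lemma natS_R {R : realType} (k : nat) : (k.+1)%:R = k%:R + 1 :> R.
Proof. by rewrite -addn1 natrD. Qed.

Lemma invsq_sum {R : realType} (k : nat) :
  \sum_(i < k) ((i.+1%:R : R) ^+ 2)^-1 <= 2 - 2 / k.+1%:R.
Proof.
elim: k => [|k IH]; first by rewrite big_ord0 divr1 subrr.
rewrite big_ord_recr /=.
have hk : 0 <= (k%:R : R) by rewrite ler0n.
suff : ((k.+1%:R : R) ^+ 2)^-1 <= 2 / k.+1%:R - 2 / k.+2%:R.
  move: IH; set a := \sum_(i < k) _; set b := (_ ^+ 2)^-1; set c := 2 / _; set d := 2 / _; lra.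
have e1 : (k.+1%:R : R) = k%:R + 1 by rewrite natS_R.
have e2 : (k.+2%:R : R) = k%:R + 2 by rewrite natS_R natS_R -addrA.
rewrite e1 e2.
have e : 2 / (k%:R + 1) - 2 / (k%:R + 2) - ((k%:R + 1) ^+ 2)^-1
   = k%:R / ((k%:R + 1) ^+ 2 * (k%:R + 2)) :> R.
  field. by apply/andP; split; lra.
have : 0 <= k%:R / ((k%:R + 1) ^+ 2 * (k%:R + 2)) :> R.
  by apply: divr_ge0 => //; apply: mulr_ge0; [apply: sqr_ge0| lra].
rewrite -e; lra.
Qed.

Lemma sum_sq_bound {R : realType} (k : nat) (g : nat -> R) :
  (\sum_(i < k) g i) ^+ 2 <= 2 * \sum_(i < k) (i.+1%:R) ^+ 2 * g i ^+ 2.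
Proof.
set G := \sum_(i < k) g i; set S := \sum_(i < k) _.
have key : forall l : R, 2 * l * G <= l ^+ 2 * \sum_(i < k) ((i.+1%:R : R) ^+ 2)^-1 + S.
  move=> l; rewrite /G /S mulr_sumr mulr_sumr -big_split /=.
  apply: ler_sum => i _.
  set m : R := i.+1%:R.
  have m0 : m != 0 by rewrite pnatr_eq0.
  have : 0 <= (l / m - m * g i) ^+ 2 by apply: sqr_ge0.
  have -> : (l / m - m * g i) ^+ 2 = l ^+ 2 * (m ^+ 2)^-1 + m ^+ 2 * g i ^+ 2 - 2 * l * g i.
    by field; rewrite addrC -natS_R pnatr_eq0.
  by rewrite subr_ge0.
have h := key (G / 2).
have h1 := @invsq_sum R k.
have h2 : 0 <= 2 / (k.+1%:R : R) by apply: divr_ge0; rewrite ?ler0n.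
have h3 : 0 <= (G / 2) ^+ 2 by apply: sqr_ge0.
set I := \sum_(i < k) _ in h h1.
have h4 : (G / 2) ^+ 2 * I <= (G / 2) ^+ 2 * 2 by apply: ler_wpM2l => //; move: h1 h2; set t := 2 / _; lra.
have e : (G / 2) ^+ 2 * 2 = G ^+ 2 / 2 by field.
have e2 : 2 * (G / 2) * G = G ^+ 2 by field.
rewrite e2 in h; rewrite e in h4.
move: h h4; set P := (G / 2) ^+ 2 * I; set Q := G ^+ 2; lra.
Qed.

Set Implicit Arguments. Unset Strict Implicit. Unset Printing Implicit Defensive.

Lemma stepA (R : realType) (n : nat) (x : R) (a b u e : 'rV[R]_n) : 0 <= x ->
 dotv (a - b) ((1 - (x+2)^-1) *: (u - b - e) - u) >= dotv (a - b) (a - b) ->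
 (x+2) * dotv a ((1 - (x+2)^-1) *: (u - b - e)) + (x+1)*(x+2)/2 * dotv a a <=
   (x+1) * dotv b u + x*(x+1)/2 * dotv b b + (x+1)*(x+2)/2 * dotv e e - (x+1) * dotv b e.
Proof.
move=> hx h1.
have h2 := dotv_ge0 (a - b + e).
rewrite !(dotvDl, dotvBl, dotvZl, dotvDr, dotvBr, dotvZr, dotvNl, dotvNr, opprK) in h1 h2 *.
rewrite ?(dotvC b a) ?(dotvC e a) ?(dotvC e b) ?(dotvC u a) ?(dotvC u b) ?(dotvC u e) in h1 h2 *.
rewrite -subr_ge0.
rewrite -subr_ge0 in h1.
have hx1 : 0 <= (x+1)*(x+2) by apply: mulr_ge0; lra.
have hx2 : 0 <= (x+1)*(x+2)/2 by apply: divr_ge0; lra.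
match type of h1 with is_true (@Order.le _ _ _ ?A) => match type of h2 with is_true (@Order.le _ _ _ ?B) =>
  match goal with |- is_true (@Order.le _ _ _ ?G) =>
   have E : G = (x+1)*(x+2)*A + (x+1)*(x+2)/2*B
end end end.
  field; apply: lt0r_neq0; lra.
rewrite E; apply: addr_ge0; apply: mulr_ge0 => //.
Qed.

Unset Implicit Arguments.


Lemma final1 (R : realType) (y W D S : R) : 0 <= y -> 0 <= D -> 0 <= S ->
  y ^+ 2 <= W -> W / 2 - y * D <= S ^+ 2 + 2 * (7 * D + 10 * S) * S ->
  W <= (7 * D + 10 * S) ^+ 2.
Proof.
move=> hy hD hS h1 h2.
set Q := 7 * D + 10 * S in h2 *.
have hQ : D <= Q by rewrite /Q; lra.
have hQ2 : 2 * Q * D + 2 * S ^+ 2 + 4 * Q * S <= Q ^+ 2.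
  rewrite /Q; nra.
have hyQ : y <= Q.
  rewrite leNgt; apply/negP => hlt.
  have : (y - Q) * (y + Q - 2 * D) > 0.
    apply: mulr_gt0; lra.
  nra.
nra.
Qed.

Lemma le_sq (R : realType) (x y : R) : 0 <= y -> x ^+ 2 <= y ^+ 2 -> x <= y.
Proof. move=> hy h; rewrite leNgt; apply/negP => hlt; nra. Qed.

Lemma sq_le (R : realType) (x y : R) : 0 <= x -> x <= y -> x ^+ 2 <= y ^+ 2.
Proof. move=> h1 h2; nra. Qed.

Lemma neg_le_abs (R : realType) (A b : R) : `|A| <= b -> - A <= b.
Proof. move=> h; apply: le_trans h; rewrite -normrN; exact: ler_norm. Qed.

Lemma comb (R : realType) (b D Ga p X Y Z : R) : 0 <= b -> b <= 1 ->
  X <= D -> Y <= D + Ga -> Z <= p -> 0 <= Ga -> 0 <= p -> 0 <= D ->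
  b * X + (1 - b) * Y + (1 - b) * Z <= D + (Ga + p).
Proof. move=> *; nra. Qed.

Lemma final2 (R : realType) (x d D S Ga g p : R) : 0 <= x -> 0 <= d -> 0 <= D -> 0 <= S ->
  0 <= g -> 0 <= p ->
  d <= (x+2)^-1 * (2 * D + Ga) + (1 - (x+2)^-1) * (g + p) -> Ga <= 2 * S ->
  (x+1) * g <= 7 * D + 10 * S -> (x+1) * p <= S ->
  d ^+ 2 * ((x+1) * (x+2)) <= 8 * (7 * D + 11 * S) ^+ 2.
Proof.
move=> hx hd hD hS hg hp h1 h2 h3 h4.
have hx2 : 0 < x + 2 by lra.
have h5 : (x + 2) * d <= 2 * D + Ga + (x + 1) * (g + p).
  have E : (x + 2) * ((x+2)^-1 * (2 * D + Ga) + (1 - (x+2)^-1) * (g + p))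
     = 2 * D + Ga + (x + 1) * (g + p).
    by field; apply: lt0r_neq0.
  rewrite -E; apply: ler_wpM2l => //; lra.
have h6 : (x + 2) * d <= 9 * D + 13 * S by nra.
have h7 : 0 <= (x + 2) * d by apply: mulr_ge0; lra.
have h8 : ((x + 2) * d) ^+ 2 <= (9 * D + 13 * S) ^+ 2 by apply: sq_le.
have h9 : d ^+ 2 * ((x+1) * (x+2)) <= ((x + 2) * d) ^+ 2.
  have := sqr_ge0 d; set t := d ^+ 2; rewrite exprMn -/t; nra.
apply: le_trans h9 _; apply: le_trans h8 _; nra.
Qed.

Lemma final3 (R : realType) (L g Q a : R) : 0 < a -> 0 <= L -> a * g ^+ 2 <= Q ^+ 2 ->
  (L * g) ^+ 2 <= (L * Q) ^+ 2 / a.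
Proof.
move=> ha hL h; rewrite ler_pdivlMr // !exprMn -mulrA.
apply: ler_wpM2l; first exact: sqr_ge0.
by rewrite mulrC.
Qed.

Lemma final4 (R : realType) (L d M a1 a2 : R) : 0 < L -> 0 < a1 -> 0 < a2 ->
  d ^+ 2 * (a1 * a2) <= 8 * M ^+ 2 ->
  d ^+ 2 <= 8 * (L * M) ^+ 2 / (L ^+ 2 * a1 * a2).
Proof.
move=> hL h1 h2 h.
have hp : 0 < L ^+ 2 * a1 * a2 by rewrite !mulr_gt0 // exprn_gt0.
rewrite ler_pdivlMr // exprMn.
have E : d ^+ 2 * (L ^+ 2 * a1 * a2) = L ^+ 2 * (d ^+ 2 * (a1 * a2)) by ring.
have E2 : 8 * (L ^+ 2 * M ^+ 2) = L ^+ 2 * (8 * M ^+ 2) by ring.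
rewrite E E2; apply: ler_wpM2l => //; exact: sqr_ge0.
Qed.


Lemma mono_nat (R : realType) (f : nat -> R) : (forall m, f m <= f m.+1) ->
  forall i k, (i <= k)%N -> f i <= f k.
Proof.
move=> hf i; elim=> [|k IH]; first by rewrite leqn0 => /eqP ->.
rewrite leq_eqVlt => /orP [/eqP -> //| hi].
exact: le_trans (IH hi) (hf k).
Qed.

Theorem theorem1 (R : realType) (n : nat) (L : R) (G : 'rV[R]_n -> 'rV[R]_n)
  (z zt : nat -> 'rV[R]_n) (gamma : nat -> R) :
  0 < L ->
  cocoercive L^-1 G ->
  (exists zs : 'rV[R]_n, G zs = 0) ->
  (forall k, 0 <= gamma k) ->
  (forall k, enorm (G (z k) - zt k) <= gamma k) ->
  (forall k, z k.+1 =
      (k.+2%:R)^-1 *: z 0%N + (1 - (k.+2%:R)^-1) *: z k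
      - ((1 - (k.+2%:R)^-1) / L) *: zt k) ->
  forall zs : 'rV[R]_n, G zs = 0 ->
  forall k : nat,
    enorm (G (z k)) ^+ 2 <=
      (7 * L * enorm (z 0%N - zs)
       + 10 * Num.sqrt (\sum_(i < k) (i.+1%:R) ^+ 2 * gamma i ^+ 2)) ^+ 2
      / (k.+1%:R * k.+2%:R)
    /\
    enorm (z k.+1 - z k) ^+ 2 <=
      8 * (7 * L * enorm (z 0%N - zs)
       + 11 * Num.sqrt (\sum_(i < k.+1) (i.+1%:R) ^+ 2 * gamma i ^+ 2)) ^+ 2
      / (L ^+ 2 * k.+1%:R * k.+2%:R).
Proof.
move=> hL hco _ hgam hzt hrec zs hzs.
set z0 := z 0%N.
have hLi : 0 < L^-1 by rewrite invr_gt0.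
have hL0 : L != 0 by apply: lt0r_neq0.
pose h x := L^-1 *: G x.
pose gp i := gamma i / L.
pose e i := L^-1 *: zt i - h (z i).
pose g i := enorm (h (z i)).
pose D := enorm (z0 - zs).
have hD : 0 <= D by apply: enorm_ge0.
have hg : forall i, 0 <= g i by move=> i; apply: enorm_ge0.
have hgp : forall i, 0 <= gp i by move=> i; apply: divr_ge0; [apply: hgam | lra].
have hcoh : forall x y, dotv (h x - h y) (x - y) >= dotv (h x - h y) (h x - h y).
  move=> x y; have := hco x y.
  rewrite /h -scalerBr dotvZl dotvZl dotvZr enorm_sq.
  by rewrite mulrA -(ler_pM2l hLi) mulrA.
have he : forall i, enorm (e i) <= gp i.
  move=> i; rewrite /e /h -scalerBr enormZ ger0_norm ?(ltW hLi) // enormB.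
  by rewrite mulrC /gp ler_pM2r //; apply: hzt.
have hs0 : h zs = 0 by rewrite /h hzs scaler0.
have hrec' : forall i, z i.+1 - z0 =
    (1 - (i.+2%:R)^-1) *: (z i - z0 - h (z i) - e i).
  move=> i; rewrite hrec /e /h; apply/matrixP => a b; rewrite !mxE /z0; ring.
have e1 : forall i, (i.+1%:R : R) = i%:R + 1 by move=> i; rewrite natS_R.
have e2 : forall i, (i.+2%:R : R) = i%:R + 2 by move=> i; rewrite natS_R natS_R -addrA.
pose P i := i.+1%:R * dotv (h (z i)) (z i - z0) + i%:R * i.+1%:R / 2 * dotv (h (z i)) (h (z i)).
have stepP : forall i, P i.+1 <= P i + i.+1%:R * i.+2%:R / 2 * gp i ^+ 2 + i.+1%:R * g i * gp i.
  move=> i.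
  have hx : 0 <= (i%:R : R) by rewrite ler0n.
  have hc := hcoh (z i.+1) (z i).
  have E : z i.+1 - z i = (z i.+1 - z0) - (z i - z0) by rewrite opprB addrA subrK.
  rewrite E hrec' e2 in hc.
  have := stepA hx hc.
  rewrite /P hrec' (e2 i) (e1 i).
  have hee : dotv (e i) (e i) <= gp i ^+ 2.
    by rewrite -enorm_sq; apply: sq_le; [apply: enorm_ge0 | apply: he].
  have hbe : - dotv (h (z i)) (e i) <= g i * gp i.
    apply: neg_le_abs; apply: le_trans (CSabs (h (z i)) (e i)) _.
    by apply: ler_wpM2l; [apply: hg | apply: he].
  have hi1 : 0 <= (i%:R : R) + 1 by lra.
  have hi2 : 0 <= ((i%:R : R) + 1) * (i%:R + 2) / 2.
    by apply: divr_ge0; [apply: mulr_ge0|]; lra.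
  have k1 := ler_wpM2l hi2 hee.
  have k2 := ler_wpM2l hi1 hbe.
  rewrite mulrN mulrA in k2.
  move: k1 k2.
  set T1 := dotv (h (z i.+1)) _; set T2 := dotv (h (z i.+1)) _.
  set T3 := dotv (h (z i)) _; set T4 := dotv (h (z i)) _.
  set T5 := dotv (e i) _; set T6 := dotv (h (z i)) (e i).
  lra.
have P0 : P 0%N = 0.
  by rewrite /P subrr dotv0r mulr0 add0r !mul0r.
pose Bsum k := \sum_(i < k) (i.+1%:R * i.+2%:R / 2 * gp i ^+ 2 + i.+1%:R * g i * gp i).
have Pup : forall k, P k <= Bsum k.
  elim=> [|k IH]; first by rewrite P0 /Bsum big_ord0.
  rewrite /Bsum big_ord_recr /=; apply: le_trans (stepP k) _.
  by rewrite -addrA lerD2r.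
have Plow : forall k, k.+1%:R * k.+2%:R / 2 * g k ^+ 2 - k.+1%:R * g k * D <= P k.
  move=> k.
  have E : z k - z0 = (z k - zs) + (zs - z0) by rewrite addrA subrK.
  rewrite /P E dotvDr.
  have h1 := hcoh (z k) zs; rewrite hs0 subr0 in h1.
  have h2 : - dotv (h (z k)) (zs - z0) <= g k * D.
    apply: neg_le_abs; apply: le_trans (CSabs _ _) _.
    by rewrite /D enormB.
  have h3 : dotv (h (z k)) (h (z k)) = g k ^+ 2 by rewrite /g enorm_sq.
  rewrite h3 in h1 *.
  have hk1 : 0 <= (k.+1%:R : R) by rewrite ler0n.
  have k1 := ler_wpM2l hk1 h1.
  have k2 := ler_wpM2l hk1 h2.
  rewrite mulrN mulrA in k2.
  move: k1 k2; rewrite (e2 k) (e1 k).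
  set T1 := dotv _ _; set T2 := dotv _ _.
  lra.
pose Sg k := \sum_(i < k) (i.+1%:R : R) ^+ 2 * gamma i ^+ 2.
pose Sp k := Num.sqrt (Sg k) / L.
pose Sq k := \sum_(i < k) (i.+1%:R : R) ^+ 2 * gp i ^+ 2.
have hSg : forall k, 0 <= Sg k.
  by move=> k; apply: sumr_ge0 => i _; apply: mulr_ge0; apply: sqr_ge0.
have SqE : forall k, Sq k = Sg k / L ^+ 2.
  move=> k; rewrite /Sq /Sg mulr_suml; apply: eq_bigr => i _.
  by rewrite /gp expr_div_n mulrA.
have SpE : forall k, Sp k ^+ 2 = Sq k.
  by move=> k; rewrite /Sp expr_div_n sqr_sqrtr // SqE.
have hSp : forall k, 0 <= Sp k.
  by move=> k; apply: divr_ge0; [apply: sqrtr_ge0 | apply: ltW].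
have Spmono : forall i k, (i <= k)%N -> Sp i <= Sp k.
  apply: mono_nat => m; rewrite /Sp; apply: ler_wpM2r; first exact: ltW.
  rewrite ler_sqrt // /Sg big_ord_recr /= lerDl.
  by apply: mulr_ge0; apply: sqr_ge0.
pose Gam k := \sum_(i < k) gp i.
have hGam : forall k, 0 <= Gam k by move=> k; apply: sumr_ge0 => i _.
have GamB : forall k, Gam k <= 2 * Sp k.
  move=> k; apply: le_sq; first by apply: mulr_ge0 => //.
  apply: le_trans (sum_sq_bound k gp) _.
  rewrite -/(Sq k) -SpE [X in _ <= X]exprMn.
  by apply: ler_wpM2r; [exact: sqr_ge0 | rewrite expr2; lra].
pose Q k := 7 * D + 10 * Sp k.
have hQ : forall k, 0 <= Q k.
  by move=> k; rewrite /Q; have := hSp k; lra.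
have W : forall k, k.+1%:R * k.+2%:R * g k ^+ 2 <= Q k ^+ 2.
  elim/ltn_ind => k IH.
  have bnd : forall i : 'I_k, i.+1%:R * g i <= Q k.
    move=> i; have Wi := IH i (ltn_ord i).
    apply: le_trans (_ : _ <= Q i) _.
      apply: le_sq => //; apply: le_trans Wi.
      rewrite exprMn (e1 i) (e2 i).
      have := sqr_ge0 (g i); have : 0 <= (i%:R : R) * g i ^+ 2.
        by apply: mulr_ge0; [rewrite ler0n | apply: sqr_ge0].
      set t := g i ^+ 2; set x := (i%:R : R); nra.
    by rewrite /Q lerD2l; apply: ler_wpM2l => //; apply: Spmono; apply: ltnW.
  have sum1 : \sum_(i < k) i.+1%:R * g i * gp i <= Q k * Gam k.
    rewrite /Gam mulr_sumr; apply: ler_sum => i _.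
    by apply: ler_wpM2r => //; apply: bnd.
  have sum2 : \sum_(i < k) i.+1%:R * i.+2%:R / 2 * gp i ^+ 2 <= Sq k.
    apply: ler_sum => i _; apply: ler_wpM2r; first exact: sqr_ge0.
    rewrite (e1 i) (e2 i).
    have : 0 <= (i%:R : R) ^+ 2 by apply: sqr_ge0.
    have : 0 <= (i%:R : R) by rewrite ler0n.
    set x := (i%:R : R); lra.
  have hB : Bsum k <= Sp k ^+ 2 + 2 * Q k * Sp k.
    rewrite /Bsum big_split /= SpE.
    have : Q k * Gam k <= Q k * (2 * Sp k) by apply: ler_wpM2l.
    move: sum1 sum2; set A := \sum_(i < k) _; set B := \sum_(i < k) _.
    set C := Q k * Gam k; set C' := Q k * (2 * Sp k).
    have -> : 2 * Q k * Sp k = C' by rewrite /C'; ring.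
    lra.
  have hl := le_trans (Plow k) (le_trans (Pup k) hB).
  apply: (@final1 _ (k.+1%:R * g k) _ D (Sp k)) => //.
  - by apply: mulr_ge0; [rewrite ler0n | apply: hg].
  - rewrite exprMn (e1 k) (e2 k).
    have := sqr_ge0 (g k); have : 0 <= (k%:R : R) * g k ^+ 2.
      by apply: mulr_ge0; [rewrite ler0n | apply: sqr_ge0].
    set t := g k ^+ 2; set x := (k%:R : R); nra.
  - move: hl; set X := _ - _; set Y := _ - _; suff -> : X = Y by [].
    by rewrite /X /Y; ring.
have nonexp : forall x y, enorm ((x - h x) - (y - h y)) <= enorm (x - y).
  move=> x y; rewrite /enorm ler_sqrt ?dotv_ge0 // subBB.
  have hc := hcoh x y.
  have hq := dotv_ge0 (h x - h y).
  rewrite !(dotvBl, dotvBr) in hc hq *.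
  rewrite (dotvC (h x) x) (dotvC (h y) x) (dotvC (h x) y) (dotvC (h y) y) in hc *.
  rewrite (dotvC (h y) (h x)) in hc hq *.
  move: hc hq; set a1 := dotv x x; set a2 := dotv x (h x); set a3 := dotv x (h y).
  set a4 := dotv y (h x); set a5 := dotv y (h y); set a6 := dotv (h x) (h x).
  set a7 := dotv (h x) (h y); set a8 := dotv (h y) (h y).
  lra.
have hb0 : forall k, 0 <= (k.+2%:R : R)^-1 by move=> k; rewrite invr_ge0 ler0n.
have hb1 : forall k, (k.+2%:R : R)^-1 <= 1.
  by move=> k; rewrite invf_le1 ?ltr0n // ler1n.
have rbound : forall k, enorm (z k - zs) <= D + Gam k.
  elim=> [|k IH]; first by rewrite /Gam big_ord0 addr0.
  have E : z k.+1 - zs = (k.+2%:R)^-1 *: (z0 - zs)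
      + (1 - (k.+2%:R)^-1) *: ((z k - h (z k)) - (zs - h zs))
      - (1 - (k.+2%:R)^-1) *: e k.
    rewrite hs0 subr0 hrec /e; apply/matrixP => a b; rewrite !mxE /z0; ring.
  rewrite E; apply: le_trans (enormD _ _) _; rewrite enormN.
  apply: le_trans (lerD (enormD _ _) (lexx _)) _.
  rewrite !enormZ !ger0_norm ?subr_ge0 //.
  rewrite /Gam big_ord_recr /= -/(Gam k).
  apply: comb => //.
  exact: le_trans (nonexp _ _) IH.
move=> k; have Wk := W k.
split.
  have -> : enorm (G (z k)) = L * g k.
    by rewrite /g /h enormZ ger0_norm ?(ltW hLi) // mulrA mulfV // mul1r.
  have -> : Num.sqrt (\sum_(i < k) (i.+1%:R) ^+ 2 * gamma i ^+ 2) = L * Sp k.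
    by rewrite /Sp /Sg mulrC divfK.
  have -> : 7 * L * enorm (z0 - zs) + 10 * (L * Sp k) = L * Q k.
    by rewrite /Q -/D; ring.
  by apply: final3; [rewrite mulr_gt0 ?ltr0n | exact: ltW | ].
have -> : Num.sqrt (\sum_(i < k.+1) (i.+1%:R) ^+ 2 * gamma i ^+ 2) = L * Sp k.+1.
  by rewrite /Sp /Sg mulrC divfK.
have -> : 7 * L * enorm (z0 - zs) + 11 * (L * Sp k.+1) = L * (7 * D + 11 * Sp k.+1).
  by rewrite -/D; ring.
apply: final4 => //; try by rewrite ltr0n.
rewrite (e1 k) (e2 k).
have hd : enorm (z k.+1 - z k) <= (k%:R + 2)^-1 * (2 * D + Gam k)
     + (1 - (k%:R + 2)^-1) * (g k + gp k).
  have E : z k.+1 - z k = - ((k.+2%:R)^-1 *: (z k - z0))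
      - (1 - (k.+2%:R)^-1) *: (h (z k) + e k).
    rewrite hrec /e; apply/matrixP => a b; rewrite !mxE /z0; ring.
  rewrite E -(e2 k); apply: le_trans (enormD _ _) _; rewrite !enormN.
  rewrite !enormZ !ger0_norm ?subr_ge0 //.
  apply: lerD; apply: ler_wpM2l; rewrite ?subr_ge0 //.
    have E2 : z k - z0 = (z k - zs) + (zs - z0) by rewrite addrA subrK.
    rewrite E2; apply: le_trans (enormD _ _) _.
    rewrite (enormB zs) -/D; have := rbound k; lra.
  by apply: le_trans (enormD _ _) _; apply: lerD => //.
apply: (@final2 _ k%:R _ D (Sp k.+1) (Gam k) (g k) (gp k)) => //.
- exact: enorm_ge0.
- exact: le_trans (GamB k) (ler_wpM2l _ (Spmono _ _ (leqnSn k))).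
- rewrite -(e1 k); apply: le_trans (_ : _ <= Q k) _.
    apply: le_sq => //; apply: le_trans Wk; rewrite exprMn.
    apply: ler_wpM2r; first exact: sqr_ge0.
    by rewrite expr2 ler_wpM2l ?ler0n // ler_nat.
  rewrite /Q lerD2l; apply: ler_wpM2l => //; exact: Spmono (leqnSn k).
- rewrite -(e1 k); apply: le_sq => //.
  rewrite SpE exprMn /Sq big_ord_recr /= lerDr.
  by apply: sumr_ge0 => i _; apply: mulr_ge0; apply: sqr_ge0.
Qed.
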